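(* Let $m\ge1$, $L\in\{L',\mathcal{R}^*\}$ and $C(m)=\{(Tr(ax))_{x\in L}:a\in\mathcal{R}\}\subseteq R^{|L|}$. Then the dual Lee distance of $C(m)$, i.e. the minimum Lee weight of a nonzero codeword of $C(m)^\perp=\{y\in R^{|L|}:\sum_{x\in L}c_xy_x=0\ \forall c\in C(m)\}$, equals $2$.
   Context: Let $R=\mathbb{F}_3[u]/(u^3-1)$ and $\mathcal{R}=\mathbb{F}_{3^m}[u]/(u^3-1)=\mathbb{F}_{3^m}+u\mathbb{F}_{3^m}+u^2\mathbb{F}_{3^m}$. Every element of $\mathcal{R}$ is uniquely $x_1+x_2(u-1)+x_3(u-1)^2$ with $x_i\in\mathbb{F}_{3^m}$; $\mathcal{R}^*$ (the units) consists of those with $x_1\neq0$. $Tr:\mathcal{R}\to R$ is $Tr(a+ub+u^2c)=tr(a)+u\,tr(b)+u^2tr(c)$, with $tr$ the absolute trace $\mathbb{F}_{3^m}\to\mathbb{F}_3$. $\mathcal{Q}$ denotes the nonzero squares of $\mathbb{F}_{3^m}$ and $L'=\{x_1+x_2(u-1)+x_3(u-1)^2:x_1\in\mathcal{Q},x_2,x_3\in\mathbb{F}_{3^m}\}$. Coordinates of $R^{|L|}$ are indexed by $L$. The Gray map $\phi:R\to\mathbb{F}_3^3$ is $\phi(a'+ub'+u^2c')=(a',b',c')$, extended coordinatewise; the Lee weight of $v\in R^n$ is the Hamming weight of $\phi(v)$. *)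

(* Defs.v *)
From HB Require Import structures.
From mathcomp Require Import all_boot all_order all_algebra all_field.
Set Implicit Arguments. Unset Strict Implicit. Unset Printing Implicit Defensive.
Import GRing.Theory.
Local Open Scope ring_scope.

(* Elements of K[u]/(u^3-1) are represented by their coefficient triples
   ((a, b), c) w.r.t. the basis 1, u, u^2, i.e. a + u b + u^2 c. *)
Definition tri (K : Type) := (K * K * K)%type.

Definition cadd (K : nzRingType) (x y : tri K) : tri K :=
  let: (a0, a1, a2) := x in let: (b0, b1, b2) := y in (a0 + b0, a1 + b1, a2 + b2).

(* multiplication modulo u^3 = 1 *)
Definition cmul (K : nzRingType) (x y : tri K) : tri K :=
  let: (a0, a1, a2) := x in let: (b0, b1, b2) := y in
  (a0 * b0 + a1 * b2 + a2 * b1,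
   a0 * b1 + a1 * b0 + a2 * b2,
   a0 * b2 + a1 * b1 + a2 * b0).

Definition R3 := tri 'F_3.
(* script R = F_{3^m}[u]/(u^3-1), for F a field with 3^m elements *)
Definition RR (F : finFieldType) := tri F.

(* The element x1 + x2 (u-1) + x3 (u-1)^2 of F[u]/(u^3-1), in the u-basis. *)
Definition ofU1 (F : finFieldType) (x1 x2 x3 : F) : RR F :=
  cadd (cadd (x1, 0, 0) (cmul (x2, 0, 0) (-1, 1, 0)))
       (cmul (x3, 0, 0) (cmul (-1, 1, 0) (-1, 1, 0))).

Definition Qsq (F : finFieldType) : {set F} :=
  [set x | (x != 0) && [exists y : F, y ^+ 2 == x]].

Definition Lprime (F : finFieldType) : {set RR F} :=
  [set ofU1 x.1.1 x.1.2 x.2 | x in [set x : F * F * F | x.1.1 \in Qsq F]].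

(* the units of script R: x1 <> 0 *)
Definition Runits (F : finFieldType) : {set RR F} :=
  [set ofU1 x.1.1 x.1.2 x.2 | x in [set x : F * F * F | x.1.1 != 0]].

(* absolute trace F_{3^m} -> F_3: the value sum_{i<m} x^(3^i) lies in the
   prime field {0, 1, 2 = -1}; we read it off as an element of 'F_3. *)
Definition trF (F : finFieldType) (m : nat) (x : F) : F :=
  \sum_(i < m) x ^+ (3 ^ i).

Definition trF3 (F : finFieldType) (m : nat) (x : F) : 'F_3 :=
  let t := trF m x in
  if t == 1 then 1 else if t == 1 + 1 then 1 + 1 else 0.

Definition Tr (F : finFieldType) (m : nat) (x : RR F) : R3 :=
  let: (a, b, c) := x in (trF3 m a, trF3 m b, trF3 m c).

Definition Lidx (F : finFieldType) (L : {set RR F}) := {x : RR F | x \in L}.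

Definition word (F : finFieldType) (L : {set RR F}) := {ffun Lidx L -> R3}.

Definition cw (F : finFieldType) (m : nat) (L : {set RR F}) (a : RR F) : word L :=
  [ffun x => Tr m (cmul a (val x))].

Definition codeC (F : finFieldType) (m : nat) (L : {set RR F}) : {set word L} :=
  [set cw m L a | a : RR F].

Definition dotR (F : finFieldType) (L : {set RR F}) (c y : word L) : R3 :=
  (\sum_x (cmul (c x) (y x)).1.1,
   \sum_x (cmul (c x) (y x)).1.2,
   \sum_x (cmul (c x) (y x)).2).

Definition dualC (F : finFieldType) (m : nat) (L : {set RR F}) : {set word L} :=
  [set y : word L | [forall c in codeC m L, dotR c y == (0, 0, 0)]].

(* Gray map phi(a' + u b' + u^2 c') = (a', b', c') and Lee weight =
   Hamming weight of the Gray image *)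
Definition gray (r : R3) : seq 'F_3 := let: (a, b, c) := r in [:: a; b; c].

Definition leeWt (F : finFieldType) (L : {set RR F}) (y : word L) : nat :=
  (\sum_x count (fun e : 'F_3 => e != 0%R) (gray (y x)))%N.

Definition zeroword (F : finFieldType) (L : {set RR F}) : word L :=
  [ffun => ((0 : 'F_3), (0 : 'F_3), (0 : 'F_3))].

(* Main.v *)
Require Import Defs.
From HB Require Import structures.
From mathcomp Require Import all_boot all_order all_algebra all_field.
From mathcomp Require Import ring zify.
Set Implicit Arguments. Unset Strict Implicit. Unset Printing Implicit Defensive.
Import GRing.Theory.
Local Open Scope ring_scope.

Section Tr.
Variables (F : finFieldType) (m : nat).
Hypothesis hm : (0 < m)%N.
Hypothesis hF : #|F| = (3 ^ m)%N.

Lemma ch3 : 3%N \in [pchar F]. Proof. exact: card_finPcharP hF _. Qed.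
Lemma three0 : (3%:R : F) = 0. Proof. exact: pcharf0 ch3. Qed.
Lemma two_neq0 : (1 + 1 : F) != 0.
Proof.
apply/eqP => h; have := three0.
have -> : (3%:R : F) = 1 + 1 + 1 by ring.
by rewrite h add0r => /eqP; rewrite oner_eq0.
Qed.

Lemma trF_cube (t : F) : trF m t ^+ 3 = trF m t.
Proof.
rewrite /trF -(pFrobenius_autE ch3) rmorph_sum /=.
under eq_bigr => i _ do rewrite pFrobenius_autE -exprM -expnSr.
case: m hm hF => [//|n] _ hF'.
rewrite big_ord_recr big_ord_recl /= -hF' expf_card expn0 expr1 addrC.
done.
Qed.

Lemma trF_vals (t : F) : trF m t = 0 \/ trF m t = 1 \/ trF m t = 1 + 1.
Proof.
set z := trF m t.
have h : z * (z - 1) * (z - (1 + 1)) = 0.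
  have -> : z * (z - 1) * (z - (1 + 1)) = z ^+ 3 - z + 3%:R * (z - z ^+ 2) by ring.
  by rewrite trF_cube three0 mul0r addr0 subrr.
move/eqP: h; rewrite !mulf_eq0 !subr_eq0 => /orP [/orP [] /eqP|/eqP]; tauto.
Qed.

Lemma trF_nz : exists t : F, trF m t != 0.
Proof.
case: m hm hF => [//|n] _ hF'.
pose p : {poly F} := \sum_(i < n.+1) 'X^(3 ^ i).
have pE t : p.[t] = trF n.+1 t.
  by rewrite /p horner_sum; apply: eq_bigr => i _; rewrite hornerXn.
have pn0 : p != 0.
  apply/eqP => /(congr1 (fun q : {poly F} => q`_(3 ^ n))).
  rewrite coef_sum coef0 big_ord_recr /= coefXn eqxx big1 ?add0r.
    by move/eqP; rewrite oner_eq0.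
  move=> i _; rewrite coefXn eqn_exp2l //.
  by rewrite eq_sym (ltn_eqF (ltn_ord i)).
have sz : (size p <= (3 ^ n).+1)%N.
  rewrite /p; elim/big_ind: _ => //.
  - by rewrite size_poly0.
  - by move=> x y hx hy; apply: leq_trans (size_polyD _ _) _; rewrite geq_max hx hy.
  - by move=> i _; rewrite size_polyXn ltnS leq_exp2l // -ltnS.
case: (boolP [forall t : F, trF n.+1 t == 0]) => [/forallP H|].
  have := max_poly_roots pn0 (rs := enum F).
  rewrite enum_uniq -cardE hF'.
  have -> : all (root p) (enum F) by apply/allP => x _; rewrite /root pE H.
  move=> /(_ isT isT) h; have := leq_trans h sz.
  rewrite expnS; have : (0 < 3 ^ n)%N by rewrite expn_gt0. lia.
by rewrite negb_forall => /existsP [t ht]; exists t.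
Qed.

Lemma trF3_0 : trF3 m (0 : F) = 0.
Proof.
rewrite /trF3; have -> : trF m (0 : F) = 0.
  by rewrite /trF big1 // => i _; rewrite expr0n expn_eq0.
rewrite eq_sym oner_eq0 eq_sym (negbTE two_neq0) //.
Qed.

Lemma trF3_nz (t : F) : trF m t != 0 -> trF3 m t != 0.
Proof.
rewrite /trF3; case: (trF_vals t) => [->|[->|->]]; first by rewrite eqxx.
  by rewrite eqxx.
by move=> _; case: ifP => _; rewrite ?eqxx.
Qed.


Lemma Dform (p q r : F) : p^+3 + q^+3 + r^+3 - 3%:R * p * q * r = (p+q+r)^+3.
Proof.
have -> : p^+3 + q^+3 + r^+3 - 3%:R * p * q * r
   = (p+q+r)^+3 - 3%:R * ((p+q)*(q+r)*(r+p) + p*q*r) by ring.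
by rewrite three0 mul0r subr0.
Qed.

Lemma ofU1E (x1 x2 x3 : F) : ofU1 x1 x2 x3 = (x1 - x2 + x3, x2 - (1+1)*x3, x3).
Proof. rewrite /ofU1 /cadd /cmul /=; congr (_,_,_); ring. Qed.

Lemma solve (p q r t : F) : p + q + r != 0 -> exists a : RR F, cmul a (p,q,r) = (t,0,0).
Proof.
move=> hS; set D := p^+3 + q^+3 + r^+3 - 3%:R * p * q * r.
have hD : D != 0 by rewrite /D Dform expf_neq0.
have key : forall s, cmul (s * (p^+2 - q*r), s * (r^+2 - p*q), s*(q^+2 - p*r)) (p,q,r)
   = (s*D, 0, 0).
  by move=> s; rewrite /cmul /D; congr (_,_,_); ring.
by exists ((t / D) * (p^+2 - q*r), (t / D) * (r^+2 - p*q), (t / D)*(q^+2 - p*r)); rewrite key divfK.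
Qed.

Lemma sum_single (I : finType) (x0 : I) (f : I -> 'F_3) :
  (forall x, x != x0 -> f x = 0) -> \sum_x f x = f x0.
Proof. by move=> h; rewrite (bigD1 x0) //= big1 ?addr0 // => x /h. Qed.

Lemma lower (L : {set RR F})
  (HL : forall x, x \in L -> exists x1 x2 x3, x1 != 0 /\ x = ofU1 x1 x2 x3) (y : word L) :
  y \in dualC m L -> y != zeroword L -> (2 <= leeWt y)%N.
Proof.
move=> hy hy0.
have [x0 hx0] : exists x0, y x0 != (0,0,0).
  case: (pickP (fun x => y x != (0,0,0))) => [x0 h|h]; first by exists x0.
  case/eqP: hy0; apply/ffunP => x; rewrite ffunE; by move/negbFE/eqP: (h x).
rewrite leqNgt; apply/negP => hlt.
have w0 : forall x, (count (fun e : 'F_3 => e != 0) (gray (y x)) == 0%N) = (y x == (0,0,0)).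
  move=> x; case: (y x) => [[a b] c] /=; rewrite !xpair_eqE.
  by case: (a =P 0); case: (b =P 0); case: (c =P 0).
have hyo : forall x, x != x0 -> y x = (0,0,0).
  move=> x hx; apply/eqP; rewrite -w0; apply/negP => /negP hw.
  move: hlt; rewrite /leeWt (bigD1 x0) //= (bigD1 x) /=; last by rewrite hx.
  move: hw; rewrite -lt0n => hw.
  have : (0 < count (fun e : 'F_3 => e != 0%R) (gray (y x0)))%N by rewrite lt0n w0.
  move=> H; rewrite ltnNge (leq_add H (leq_trans hw (leq_addr _ _))) //.
have [x1 [x2 [x3 [hx1 hv]]]] := HL _ (valP x0).
have hsum := ofU1E x1 x2 x3; rewrite -hv in hsum.
have [t ht] := trF_nz.
have hS : (x1 - x2 + x3) + (x2 - (1+1)*x3) + x3 != 0.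
  by have -> : (x1 - x2 + x3) + (x2 - (1+1)*x3) + x3 = x1 by ring.
have [a ha] := solve t hS.
rewrite inE in hy; move/forallP: hy => /(_ (cw m L a)); rewrite imset_f // => /= /eqP hd.
have hz : forall x, x != x0 -> cmul (cw m L a x) (y x) = (0,0,0).
  by move=> x hx; rewrite hyo //; case: (cw m L a x) => [[? ?] ?] /=; rewrite !mulr0 !addr0.
move: hd; rewrite /dotR !(@sum_single _ x0); last first.
- by move=> x hx; rewrite hz.
- by move=> x hx; rewrite hz.
- by move=> x hx; rewrite hz.
rewrite ffunE hsum ha /= trF3_0.
move: hx0 (trF3_nz ht); case: (y x0) => [[b0 b1] b2] /=.
rewrite !mul0r !addr0 => hb hk E.
have /eqP e0 := congr1 (fun z => z.1.1) E; have /eqP e1 := congr1 (fun z => z.1.2) E.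
have /eqP e2 := congr1 (fun z => z.2) E.
move: e0 e1 e2; rewrite /= !mulf_eq0 (negbTE hk) /= => /eqP e0 /eqP e1 /eqP e2.
by move: hb; rewrite e0 e1 e2 eqxx.
Qed.

Lemma upper (L : {set RR F}) (h1 : ((1,0,0) : RR F) \in L) (hu : ((0,1,0) : RR F) \in L) :
  exists2 y, y \in dualC m L & y != zeroword L /\ leeWt y = 2%N.
Proof.
pose i1 : Lidx L := @exist _ (fun x => x \in L) _ h1. pose iu : Lidx L := @exist _ (fun x => x \in L) _ hu.
have hne : iu != i1.
  apply/eqP => /(congr1 (fun z => (val z).1.1)) /= /eqP; by rewrite eq_sym oner_eq0.
pose y : word L := [ffun z => if z == i1 then ((0:'F_3),(1:'F_3),(0:'F_3))
   else if z == iu then (-1,0,0) else (0,0,0)].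
have yo : forall x, x != i1 -> x != iu -> y x = (0,0,0).
  by move=> x h1' hu'; rewrite ffunE (negbTE h1') (negbTE hu').
have two : forall (V : nmodType) (f : Lidx L -> V),
    (forall x, x != i1 -> x != iu -> f x = 0) -> \sum_x f x = f i1 + f iu.
  move=> V f hf; rewrite (bigD1 i1) //= (bigD1 iu) /= ?hne // big1 ?addr0 //.
  by move=> x /andP [? ?]; exact: hf.
exists y.
- rewrite inE; apply/forallP => c; apply/implyP => /imsetP [a _ ->].
  rewrite /dotR !two; first last.
  - by move=> x ha hb; rewrite yo //; case: (cw m L a x) => [[? ?] ?] /=; rewrite !mulr0 !addr0.
  - by move=> x ha hb; rewrite yo //; case: (cw m L a x) => [[? ?] ?] /=; rewrite !mulr0 !addr0.
  - by move=> x ha hb; rewrite yo //; case: (cw m L a x) => [[? ?] ?] /=; rewrite !mulr0 !addr0.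
  rewrite !ffunE eqxx (negbTE hne) eqxx /=.
  case: a => [[a0 a1] a2] /=.
  rewrite !(mulr1, mulr0, addr0, add0r).
  apply/eqP; congr (_,_,_); ring.
split.
  apply/eqP => /(congr1 (fun z : word L => (z i1).1.2)); rewrite !ffunE eqxx /=.
  by move/eqP; rewrite oner_eq0.
rewrite /leeWt (two nat) ?ffunE ?eqxx ?(negbTE hne) //=.
by move=> x ha hb; rewrite yo.
Qed.

End Tr.

Theorem theorem7p2 (F : finFieldType) (m : nat) (L : {set RR F}) :
  (0 < m)%N -> #|F| = (3 ^ m)%N ->
  (L = Lprime F \/ L = Runits F) ->
  (exists2 y, y \in dualC m L & y != zeroword L /\ leeWt y = 2%N) /\
  (forall y, y \in dualC m L -> y != zeroword L -> (2 <= leeWt y)%N).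
Proof.
move=> hm hF hL.
have e1E : ((1,0,0) : RR F) = ofU1 1 0 0.
  by rewrite ofU1E; congr (_,_,_); ring.
have euE : ((0,1,0) : RR F) = ofU1 1 1 0.
  by rewrite ofU1E; congr (_,_,_); ring.
have HL : forall x, x \in L -> exists x1 x2 x3, x1 != 0 /\ x = ofU1 x1 x2 x3.
  case: hL => -> x /imsetP [[[x1 x2] x3]]; rewrite inE /= => h ->;
    exists x1, x2, x3; split => //.
  by move: h; rewrite inE => /andP [].
have hmem : ((1,0,0) : RR F) \in L /\ ((0,1,0) : RR F) \in L.
  have q1 : (1 : F) \in Qsq F.
    by rewrite inE oner_eq0 /=; apply/existsP; exists 1; rewrite expr1n.
  case: hL => ->; rewrite e1E euE; split; apply/imsetP;
    [exists (1,0,0) | exists (1,1,0) | exists (1,0,0) | exists (1,1,0)];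
    rewrite /= ?inE /= ?oner_eq0 //=; apply/existsP; exists 1; rewrite expr1n //.
case: hmem => h1 hu.
split; first exact: upper h1 hu.
exact: (@lower F m hm hF L HL).
Qed.
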